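(* Let $X$ be a first-countable well-filtered space such that $\min(K)$ is countable for every $K\in\mathsf{K}(X)$. The following are equivalent: (1) $X$ is locally compact. (2) $\mathsf{K}(X)$ is a continuous semilattice, and $\xi_X^\sigma:X\to\Sigma\,\mathsf{K}(X)$, $x\mapsto\uparrow x$, is continuous. (3) $\mathsf{K}(X)$ is a continuous semilattice, and $X$ has property Q. (4) $\mathsf{K}(X)$ is a continuous semilattice. (5) $X$ is core compact.
   Context: Spaces are $T_0$; specialization order $x\le y$ iff $x\in\overline{\{y\}}$; saturated = upper set; $\min(K)$ = minimal points of $K$. $\mathsf{K}(X)$ = nonempty compact saturated subsets ordered by reverse inclusion (suprema, when they exist, are intersections). Scott topology on a poset: upper sets $U$ such that every directed $D$ with existing supremum in $U$ meets $U$; $\Sigma Q$ is $Q$ with it. $a\ll b$ means for every directed $D$ with existing $\bigvee D\ge b$ some $d\in D$ has $d\ge a$; $\mathsf{K}(X)$ is a continuous semilattice if it is directed complete and each $K$ is the directed supremum of $\{L:L\ll K\}$. Well-filtered: for open $U$ and $\mathcal K\subseteq\mathsf{K}(X)$ filtered under inclusion, $\bigcap\mathcal K\subseteq U$ implies some $K\in\mathcal K$ lies in $U$. Property Q: $K_1\ll K_2$ iff $K_2\subseteq\operatorname{int}K_1$. Locally compact: neighborhood bases of compact sets. Core compact: open-set lattice is continuous. *)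

(* Defs.v *)
From Stdlib Require Import Classical List FunctionalExtensionality PropExtensionality.
Set Implicit Arguments.
Unset Strict Implicit.

Record space := Space {
  pt :> Type;
  open : (pt -> Prop) -> Prop;
  open_full : open (fun _ => True);
  open_inter : forall U V, open U -> open V -> open (fun x => U x /\ V x);
  open_union : forall F : (pt -> Prop) -> Prop,
      (forall U, F U -> open U) -> open (fun x => exists U, F U /\ U x)
}.

Section Topology.
Variable X : space.

Definition subset (A B : X -> Prop) : Prop := forall x, A x -> B x.
Definition closed (C : X -> Prop) : Prop := @open X (fun x => ~ C x).
Definition closure (A : X -> Prop) : X -> Prop :=
  fun x => forall C, closed C -> subset A C -> C x.
Definition interior (A : X -> Prop) : X -> Prop :=
  fun x => exists U, @open X U /\ U x /\ subset U A.

Definition T0 : Prop :=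
  forall x y : X, (forall U, @open X U -> (U x <-> U y)) -> x = y.

Definition spec_le (x y : X) : Prop := closure (fun z => z = y) x.

Definition saturated (A : X -> Prop) : Prop :=
  forall x y, A x -> spec_le x y -> A y.

Definition up (x : X) : X -> Prop := fun y => spec_le x y.

Definition minimal (K : X -> Prop) : X -> Prop :=
  fun x => K x /\ forall y, K y -> spec_le y x -> y = x.

Definition compact (K : X -> Prop) : Prop :=
  forall F : (X -> Prop) -> Prop, (forall U, F U -> @open X U) ->
    subset K (fun x => exists U, F U /\ U x) ->
    exists l : list (X -> Prop), (forall U, In U l -> F U) /\
      subset K (fun x => exists U, In U l /\ U x).

Definition inKX (K : X -> Prop) : Prop :=
  (exists x, K x) /\ compact K /\ saturated K.

Definition countable (A : X -> Prop) : Prop :=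
  exists f : X -> nat, forall a b, A a -> A b -> f a = f b -> a = b.

Definition nbhd (N : X -> Prop) (x : X) : Prop :=
  exists U, @open X U /\ U x /\ subset U N.

Definition first_countable : Prop :=
  forall x : X, exists B : nat -> (X -> Prop),
    (forall n, nbhd (B n) x) /\ (forall N, nbhd N x -> exists n, subset (B n) N).

Definition filtered_family (KK : (X -> Prop) -> Prop) : Prop :=
  (exists K, KK K) /\
  forall K1 K2, KK K1 -> KK K2 ->
    exists K3, KK K3 /\ subset K3 K1 /\ subset K3 K2.

Definition well_filtered : Prop :=
  forall (U : X -> Prop) (KK : (X -> Prop) -> Prop),
    @open X U -> (forall K, KK K -> inKX K) -> filtered_family KK ->
    subset (fun x => forall K, KK K -> K x) U ->
    exists K, KK K /\ subset K U.

Definition locally_compact : Prop :=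
  forall x (U : X -> Prop), @open X U -> U x ->
    exists K, compact K /\ nbhd K x /\ subset K U.

End Topology.

Section Order.
Variables (P : Type) (le : P -> P -> Prop).

Definition directed (D : P -> Prop) : Prop :=
  (exists d, D d) /\
  forall a b, D a -> D b -> exists c, D c /\ le a c /\ le b c.

Definition is_sup (D : P -> Prop) (s : P) : Prop :=
  (forall d, D d -> le d s) /\ (forall u, (forall d, D d -> le d u) -> le s u).

Definition way_below (a b : P) : Prop :=
  forall D s, directed D -> is_sup D s -> le b s -> exists d, D d /\ le a d.

Definition directed_complete : Prop :=
  forall D, directed D -> exists s, is_sup D s.

Definition continuous_poset : Prop :=
  directed_complete /\
  forall b, directed (fun a => way_below a b) /\ is_sup (fun a => way_below a b) b.

Definition scott_open (U : P -> Prop) : Prop :=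
  (forall a b, U a -> le a b -> U b) /\
  (forall D s, directed D -> is_sup D s -> U s -> exists d, D d /\ U d).

End Order.

Definition KX (X : space) : Type := { K : X -> Prop | inKX K }.
Definition KX_le (X : space) (A B : KX X) : Prop :=
  subset (proj1_sig B) (proj1_sig A).

Definition OX (X : space) : Type := { U : X -> Prop | @open X U }.
Definition OX_le (X : space) (U V : OX X) : Prop :=
  subset (proj1_sig U) (proj1_sig V).

Definition core_compact (X : space) : Prop := continuous_poset (@OX_le X).

Definition property_Q (X : space) : Prop :=
  forall K1 K2 : KX X, way_below (@KX_le X) K1 K2 <->
    subset (proj1_sig K2) (interior (proj1_sig K1)).

Lemma spec_le_open (X : space) (x y : X) :
  spec_le x y <-> forall U, @open X U -> U x -> U y.
Proof.
  split.
  - intros H U HU Ux. apply NNPP; intro nUy.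
    assert (Hc : closed (fun z => ~ U z)).
    { unfold closed.
      assert (E : (fun x0 => ~ ~ U x0) = U).
      { apply FunctionalExtensionality.functional_extensionality; intro z.
        apply PropExtensionality.propositional_extensionality; split;
          [apply NNPP | auto]. }
      rewrite E; exact HU. }
    apply (H _ Hc); [intros z ->; exact nUy | exact Ux].
  - intros H C HC Hsub. apply NNPP; intro nCx.
    apply (H _ HC nCx). apply Hsub; reflexivity.
Qed.

Lemma up_inKX (X : space) (x : X) : inKX (up x).
Proof.
  split; [|split].
  - exists x. unfold up. apply spec_le_open; auto.
  - intros F HF Hcov.
    destruct (Hcov x) as [U [FU Ux]].
    { unfold up. apply spec_le_open; auto. }
    exists (U :: nil). split.
    + intros V [<-|[]]; exact FU.
    + intros y Hy. exists U. split; [left; reflexivity|].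
      unfold up in Hy. rewrite spec_le_open in Hy. apply Hy; [apply HF; exact FU | exact Ux].
  - intros y z Hy Hz. unfold up in *. rewrite spec_le_open in *.
    intros U HU Ux. apply Hz; [exact HU | apply Hy; assumption].
Qed.

Definition upK (X : space) (x : X) : KX X := exist _ (up x) (up_inKX x).

Definition xi_sigma_continuous (X : space) : Prop :=
  forall 𝒰 : KX X -> Prop, scott_open (@KX_le X) 𝒰 -> @open X (fun x => 𝒰 (upK x)).

(* Main.v *)
Require Import Defs.
From Stdlib Require Import Classical List.
From Stdlib Require Import ClassicalEpsilon FunctionalExtensionality PropExtensionality Lia PeanoNat.
From mathcomp Require classical_sets.



Section Basic.
Variable X : space.

Lemma open_ext (U V : X -> Prop) : (forall x, U x <-> V x) -> open U -> open V.
Proof.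
  intros H HU. replace V with U; auto.
  apply functional_extensionality; intro; apply propositional_extensionality; auto.
Qed.

Lemma spec_refl (x : X) : spec_le x x.
Proof. apply spec_le_open; auto. Qed.

Lemma spec_trans (x y z : X) : spec_le x y -> spec_le y z -> spec_le x z.
Proof.
  intros H1 H2. apply spec_le_open. intros U HU Ux.
  apply (proj1 (spec_le_open y z) H2 U HU). apply (proj1 (spec_le_open x y) H1 U HU Ux).
Qed.

Lemma open_up (U : X -> Prop) x y : open U -> U x -> spec_le x y -> U y.
Proof. intros HU Ux H. rewrite spec_le_open in H. exact (H U HU Ux). Qed.

Lemma open_empty : open (fun _ : X => False).
Proof.
  eapply open_ext; [|apply (open_union (F := fun _ => False)); intros U []].
  intro x; simpl; split; [intros [U [[] _]] | intros []].
Qed.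

Lemma open_union2 (U V : X -> Prop) : open U -> open V -> open (fun x => U x \/ V x).
Proof.
  intros HU HV.
  eapply open_ext; [|apply (open_union (F := fun W => W = U \/ W = V))].
  - intro x; split.
    + intros [W [[->| ->] Wx]]; auto.
    + intros [Ux|Vx]; [exists U|exists V]; auto.
  - intros W [->| ->]; auto.
Qed.

Lemma open_list (l : list (X -> Prop)) :
  (forall U, In U l -> open U) -> open (fun x => exists U, In U l /\ U x).
Proof. intros H. apply (open_union (F := fun U => In U l)). auto. Qed.

Lemma interior_open (A : X -> Prop) : open (interior A).
Proof.
  eapply open_ext; [|apply (open_union (F := fun U => open U /\ subset U A)); intros U [H _]; exact H].
  intro x; unfold interior; split.
  - intros [U [[HU HA] Ux]]. exists U; auto.
  - intros [U [HU [Ux HA]]]. exists U; auto.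
Qed.

Lemma interior_sub (A : X -> Prop) : subset (interior A) A.
Proof. intros x [U [_ [Ux H]]]. auto. Qed.

Lemma interior_mono (A B : X -> Prop) : subset A B -> subset (interior A) (interior B).
Proof. intros H x [U [HU [Ux HA]]]. exists U; repeat split; auto. intros y Hy; auto. Qed.

Lemma open_interior (U A : X -> Prop) x : open U -> U x -> subset U A -> interior A x.
Proof. intros; exists U; auto. Qed.

Lemma open_not_below (z : X) : open (fun y => ~ spec_le y z).
Proof.
  eapply open_ext; [|apply (open_union (F := fun U => open U /\ ~ U z)); intros U [H _]; exact H].
  intro y; split.
  - intros [U [[HU nUz] Uy]] Hyz. apply nUz. eapply open_up; eauto.
  - intros H. rewrite spec_le_open in H.
    apply not_all_ex_not in H. destruct H as [U H].
    exists U. apply imply_to_and in H. destruct H as [HU H].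
    apply imply_to_and in H. destruct H as [Uy nUz]. auto.
Qed.

Lemma compact_sat (C : X -> Prop) : compact C -> compact (fun z => exists y, C y /\ spec_le y z).
Proof.
  intros HC F HF Hcov.
  destruct (HC F HF) as [l [Hl Hsub]].
  { intros y Cy. apply Hcov. exists y; split; auto. apply spec_refl. }
  exists l; split; auto.
  intros z [y [Cy Hyz]]. destruct (Hsub y Cy) as [U [InU Uy]].
  exists U; split; auto. eapply open_up; eauto.
Qed.

Lemma compact_list (lc : list (X -> Prop)) :
  (forall C, In C lc -> compact C) -> compact (fun z => exists C, In C lc /\ C z).
Proof.
  induction lc as [|C lc IH]; intros H F HF Hcov.
  - exists nil; split; [intros U []|]. intros z [C [[] _]].
  - destruct (H C (or_introl eq_refl) F HF) as [l1 [Hl1 Hs1]].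
    { intros z Cz. apply Hcov. exists C; split; auto. left; auto. }
    destruct (IH (fun C' h => H C' (or_intror h)) F HF) as [l2 [Hl2 Hs2]].
    { intros z [C' [h Cz]]. apply Hcov. exists C'; split; auto. right; auto. }
    exists (l1 ++ l2); split.
    + intros U HU. apply in_app_iff in HU. destruct HU; auto.
    + intros z [C' [[<-|h] Cz]].
      * destruct (Hs1 z Cz) as [U [HU Uz]]. exists U; split; auto. apply in_app_iff; auto.
      * destruct (Hs2 z (ex_intro _ C' (conj h Cz))) as [U [HU Uz]].
        exists U; split; auto. apply in_app_iff; auto.
Qed.

Lemma finite_choice {A B : Type} (P : A -> B -> Prop) (l : list A) :
  (forall a, In a l -> exists b, P a b) ->
  exists lb, (forall a, In a l -> exists b, In b lb /\ P a b) /\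
             (forall b, In b lb -> exists a, In a l /\ P a b).
Proof.
  induction l as [|a l IH]; intros H.
  - exists nil; split; [intros a []|intros b []].
  - destruct (H a (or_introl eq_refl)) as [b Hb].
    destruct (IH (fun a' h => H a' (or_intror h))) as [lb [H1 H2]].
    exists (b :: lb); split.
    + intros a' [<-|h]. exists b; split; auto. left; auto.
      destruct (H1 a' h) as [b' [? ?]]. exists b'; split; auto. right; auto.
    + intros b' [<-|h]. exists a; split; auto. left; auto.
      destruct (H2 b' h) as [a' [? ?]]. exists a'; split; auto. right; auto.
Qed.

Lemma LC_interp (HLC : locally_compact X) (K V : X -> Prop) :
  compact K -> open V -> subset K V ->
  exists L, compact L /\ saturated L /\ subset K (interior L) /\ subset L V.
Proof.
  intros HK HV HKV.
  set (P := fun (O C : X -> Prop) => compact C /\ subset O C /\ subset C V).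
  set (F := fun O => open O /\ exists C, P O C).
  destruct (HK F) as [l [Hl Hcov]].
  { intros U [H _]; exact H. }
  { intros x Kx. destruct (HLC x V HV (HKV x Kx)) as [C [HC [[O [HO [Ox HOC]]] HCV]]].
    exists O; split; auto. split; auto. exists C; repeat split; auto. }
  destruct (finite_choice P l) as [lc [H1 H2]].
  { intros O HO. destruct (Hl O HO) as [_ HC]. exact HC. }
  exists (fun z => exists y, (exists C, In C lc /\ C y) /\ spec_le y z).
  split; [|split; [|split]].
  - apply compact_sat, compact_list. intros C HC. destruct (H2 C HC) as [O [_ [? _]]]; auto.
  - intros a b [y [Hy Hya]] Hab. exists y; split; auto. eapply spec_trans; eauto.
  - intros x Kx. destruct (Hcov x Kx) as [O [HO Ox]].
    destruct (Hl O HO) as [HOo _].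
    destruct (H1 O HO) as [C [HC [_ [HOC _]]]].
    apply (open_interior O); auto.
    intros z Oz. exists z; split; [exists C; auto| apply spec_refl].
  - intros z [y [[C [HC Cy]] Hyz]]. destruct (H2 C HC) as [O [_ [_ [_ HCV]]]].
    eapply open_up; eauto.
Qed.

Lemma list_cover (s : nat -> X) (F : (X -> Prop) -> Prop) (n k : nat) :
  (forall m, n <= m -> exists U, F U /\ U (s m)) ->
  exists l, (forall U, In U l -> F U) /\
    forall m, n <= m < n + k -> exists U, In U l /\ U (s m).
Proof.
  intros H. induction k as [|k IH].
  - exists nil; split; [intros U []|intros m Hm; lia].
  - destruct IH as [l [H1 H2]]. destruct (H (n + k)) as [U [FU Us]]; [lia|].
    exists (U :: l); split.
    + intros V [<-|h]; auto.
    + intros m Hm. destruct (Nat.eq_dec m (n + k)) as [->|ne].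
      * exists U; split; auto. left; auto.
      * destruct (H2 m) as [V [? ?]]; [lia|]. exists V; split; auto. right; auto.
Qed.

Lemma WF_inter (Hwf : well_filtered X) (KK : (X -> Prop) -> Prop) :
  (forall K, KK K -> inKX K) -> filtered_family KK ->
  inKX (fun x => forall K, KK K -> K x).
Proof.
  intros HK Hf. split; [|split].
  - apply NNPP; intro Hne.
    destruct (Hwf (fun _ => False) KK open_empty HK Hf) as [K [KKK HKe]].
    { intros x Hx. apply Hne. exists x; auto. }
    destruct (HK K KKK) as [[x Kx] _]. exact (HKe x Kx).
  - intros F HF Hcov.
    destruct (Hwf _ KK (open_union HF) HK Hf Hcov) as [K [KKK HKU]].
    destruct (HK K KKK) as [_ [HKc _]].
    destruct (HKc F HF HKU) as [l [Hl Hs]].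
    exists l; split; auto. intros x Hx. apply Hs. exact (Hx K KKK).
  - intros x y Hx Hxy K KKK. destruct (HK K KKK) as [_ [_ HS]]. exact (HS x y (Hx K KKK) Hxy).
Qed.

End Basic.


Section Gen.
Variables (P : Type) (le : P -> P -> Prop).
Hypothesis le_refl : forall a, le a a.
Hypothesis le_trans : forall a b c, le a b -> le b c -> le a c.

Lemma wb_le a b : way_below le a b -> le a b.
Proof.
  intros H. destruct (H (fun d => d = b) b) as [d [-> Hd]]; auto.
  - split; [exists b; auto|]. intros a0 b0 -> ->. exists b; auto.
  - split; [intros d ->; auto| intros u Hu; apply Hu; auto].
Qed.

Lemma wb_mono a a' b b' : le a' a -> way_below le a b -> le b b' -> way_below le a' b'.
Proof.
  intros H1 H H2 D s HD Hs Hb. destruct (H D s HD Hs) as [d [Dd Hd]]; eauto.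
Qed.
End Gen.

Section OXs.
Variable X : space.

Lemma OUnion_open (D : OX X -> Prop) :
  open (fun x => exists U, (exists d, D d /\ proj1_sig d = U) /\ U x).
Proof.
  apply (open_union (F := fun U => exists d, D d /\ proj1_sig d = U)).
  intros U [d [_ <-]]. exact (proj2_sig d).
Qed.

Definition OUnion (D : OX X -> Prop) : OX X :=
  exist _ (fun x => exists U, (exists d, D d /\ proj1_sig d = U) /\ U x) (OUnion_open D).

Lemma OUnion_sup D : is_sup (@OX_le X) D (OUnion D).
Proof.
  split.
  - intros d Dd x dx. exists (proj1_sig d); split; auto. exists d; auto.
  - intros u Hu x [U [[d [Dd <-]] dx]]. exact (Hu d Dd x dx).
Qed.

Lemma OX_refl (a : OX X) : OX_le a a.
Proof. intros x h; exact h. Qed.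
Lemma OX_trans (a b c : OX X) : OX_le a b -> OX_le b c -> OX_le a c.
Proof. intros h1 h2 x h; exact (h2 x (h1 x h)). Qed.

Lemma sup_in_union D s (x : X) : is_sup (@OX_le X) D s -> proj1_sig s x ->
  exists d, D d /\ proj1_sig d x.
Proof.
  intros [_ Hl] sx. destruct (Hl (OUnion D) (proj1 (OUnion_sup D)) x sx) as [U [[d [Dd <-]] dx]].
  exists d; auto.
Qed.

Definition Oempty : OX X := exist _ (fun _ => False) (open_empty X).
Definition Ounion2 (a b : OX X) : OX X :=
  exist _ (fun x => proj1_sig a x \/ proj1_sig b x) (@open_union2 X _ _ (proj2_sig a) (proj2_sig b)).

Lemma Owb_union2 a b c : way_below (@OX_le X) a c -> way_below (@OX_le X) b c ->
  way_below (@OX_le X) (Ounion2 a b) c.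
Proof.
  intros Ha Hb D s HD Hs Hc.
  destruct (Ha D s HD Hs Hc) as [d1 [D1 H1]].
  destruct (Hb D s HD Hs Hc) as [d2 [D2 H2]].
  destruct (proj2 HD d1 d2 D1 D2) as [d3 [D3 [H13 H23]]].
  exists d3; split; auto. intros x [h|h]; [apply H13, H1 | apply H23, H2]; exact h.
Qed.

Lemma Oempty_wb a : way_below (@OX_le X) Oempty a.
Proof.
  intros D s [[d Dd] _] _ _. exists d; split; auto. intros x [].
Qed.

Lemma Ocont_point (Hcc : core_compact X) (V : OX X) x :
  proj1_sig V x -> exists W, way_below (@OX_le X) W V /\ proj1_sig W x.
Proof.
  intros Vx. destruct Hcc as [_ H]. destruct (H V) as [_ Hs].
  exact (sup_in_union _ _ x Hs Vx).
Qed.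

Lemma Ointerp (Hcc : core_compact X) (W V : OX X) :
  way_below (@OX_le X) W V -> exists V', way_below (@OX_le X) W V' /\ way_below (@OX_le X) V' V.
Proof.
  intros HW.
  set (D := fun O => exists O', way_below (@OX_le X) O O' /\ way_below (@OX_le X) O' V).
  assert (HD : directed (@OX_le X) D).
  { split.
    - destruct Hcc as [_ H]. destruct (H V) as [[[d Hd] _] _].
      exists Oempty. exists d; split; auto. apply Oempty_wb.
    - intros a b [a' [Ha1 Ha2]] [b' [Hb1 Hb2]].
      destruct Hcc as [_ H]. destruct (H V) as [[_ Hdir] _].
      destruct (Hdir a' b' Ha2 Hb2) as [c' [Hc' [Hac Hbc]]].
      exists (Ounion2 a b); split; [|split].
      + exists c'; split; auto. apply Owb_union2.
        * eapply wb_mono; [exact (@OX_trans)|apply OX_refl|exact Ha1|exact Hac].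
        * eapply wb_mono; [exact (@OX_trans)|apply OX_refl|exact Hb1|exact Hbc].
      + intros x h; left; exact h.
      + intros x h; right; exact h. }
  destruct (HW D (OUnion D) HD (OUnion_sup D)) as [d [[O' [H1 H2]] Hd]].
  { intros x Vx. destruct (Ocont_point Hcc V x Vx) as [W1 [HW1 W1x]].
    destruct (Ocont_point Hcc W1 x W1x) as [W2 [HW2 W2x]].
    exists (proj1_sig W2); split; auto. exists W2; split; auto. exists W1; auto. }
  exists O'; split; auto.
  eapply wb_mono; [exact (@OX_trans)|exact Hd|exact H1|apply OX_refl].
Qed.

End OXs.

Section KXs.
Variable X : space.

Lemma KX_dsup (Hwf : well_filtered X) (D : KX X -> Prop) :
  directed (@KX_le X) D ->
  exists s, is_sup (@KX_le X) D s /\ forall x, proj1_sig s x <-> (forall d, D d -> proj1_sig d x).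
Proof.
  intros [[d0 Dd0] Hdir].
  set (KK := fun K => exists k, D k /\ proj1_sig k = K).
  assert (HK : forall K, KK K -> inKX K).
  { intros K [k [_ <-]]. exact (proj2_sig k). }
  assert (Hf : filtered_family KK).
  { split. exists (proj1_sig d0); exists d0; auto.
    intros K1 K2 [k1 [D1 <-]] [k2 [D2 <-]].
    destruct (Hdir k1 k2 D1 D2) as [k3 [D3 [H1 H2]]].
    exists (proj1_sig k3); split; [exists k3; auto|split; auto]. }
  pose proof (WF_inter X Hwf KK HK Hf) as HI.
  exists (exist _ _ HI). split.
  - split.
    + intros d Dd x Hx. simpl in Hx. apply Hx. exists d; auto.
    + intros u Hu x ux. simpl. intros K [k [Dk <-]]. exact (Hu k Dk x ux).
  - intros x; simpl; split.
    + intros H d Dd. apply H. exists d; auto.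
    + intros H K [k [Dk <-]]. auto.
Qed.

Lemma KX_sup_inter (Hwf : well_filtered X) (D : KX X -> Prop) s :
  directed (@KX_le X) D -> is_sup (@KX_le X) D s ->
  forall x, (forall d, D d -> proj1_sig d x) -> proj1_sig s x.
Proof.
  intros HD [_ Hl] x Hx. destruct (KX_dsup Hwf D HD) as [s' [[Hu _] Hs']].
  apply (Hl s'). intros d Dd. exact (Hu d Dd). apply Hs'. exact Hx.
Qed.

End KXs.


Section Chain.
Variable X : space.
Hypothesis Hwf : well_filtered X.
Variable V : nat -> OX X.
Hypothesis HV : forall n, way_below (@OX_le X) (V (S n)) (V n).

Lemma Vdec n m : n <= m -> subset (proj1_sig (V m)) (proj1_sig (V n)).
Proof.
  induction 1.
  - intros x h; exact h.
  - intros x h. apply IHle. pose proof (wb_le _ _ (OX_refl X) _ _ (HV m)) as W. exact (W x h).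
Qed.

Lemma chain_key (G : X -> Prop) (HG : open G) :
  subset (fun z => forall n, proj1_sig (V n) z) G -> exists n, subset (proj1_sig (V n)) G.
Proof.
  intros HKG. apply NNPP; intro Hno.
  assert (H : forall n, exists z, proj1_sig (V n) z /\ ~ G z).
  { intro n. apply NNPP; intro h. apply Hno. exists n. intros z Vz.
    apply NNPP; intro nG. apply h. exists z; auto. }
  set (P' := fun O : X -> Prop => open O /\ forall n, exists z, ~ (O z \/ G z) /\ proj1_sig (V n) z).
  destruct (@classical_sets.Zorn_bigcup X P') as [O [[HOo HOm] Hmax]].
  { intros F' HF' Htot. split.
    - eapply open_ext; [|apply (open_union (F := F'))].
      + intro x; split.
        * intros [U [FU Ux]]. exists U; auto.
        * intros [U FU Ux]. exists U; auto.
      + intros U FU. exact (proj1 (HF' U FU)).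
    - intro n. apply NNPP; intro hn.
      assert (hn' : forall z, proj1_sig (V n) z ->
                 (classical_sets.bigcup F' (fun X0 => X0) z \/ G z)).
      { intros z Vz. apply NNPP; intro h. apply hn. exists z; auto. }
      set (Ge := exist (fun U : X -> Prop => open U) G HG).
      set (E := fun e : OX X => (forall z, proj1_sig e z <-> G z) \/
                 exists O, F' O /\ forall z, proj1_sig e z <-> (O z \/ G z)).
      assert (HE : directed (@OX_le X) E).
      { split. exists Ge. left. intro; simpl; tauto.
        intros a b Ha Hb.
        destruct Ha as [Ha|[Oa [Fa Ha]]]; destruct Hb as [Hb|[Ob [Fb Hb]]].
        - exists a. split; [left; auto|split; [apply OX_refl|]].
          intros z h. apply Ha, Hb, h.
        - exists b. split; [right; exists Ob; auto|split; [|apply OX_refl]].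
          intros z h. apply Hb. right. apply Ha, h.
        - exists a. split; [right; exists Oa; auto|split; [apply OX_refl|]].
          intros z h. apply Ha. right. apply Hb, h.
        - destruct (Htot Oa Ob Fa Fb) as [hab|hba].
          + exists b. split; [right; exists Ob; auto|split; [|apply OX_refl]].
            intros z h. apply Hb. apply Ha in h. destruct h as [h|h]; [left; apply hab; exact h|right; exact h].
          + exists a. split; [right; exists Oa; auto|split; [apply OX_refl|]].
            intros z h. apply Ha. apply Hb in h. destruct h as [h|h]; [left; apply hba; exact h|right; exact h]. }
      destruct (@HV n E (OUnion X E) HE (OUnion_sup X E)) as [d [Ed Hd]].
      { intros z Vz. destruct (hn' z Vz) as [[U FU Uz]|Gz].
        - assert (HU : open U) by exact (proj1 (HF' U FU)).
          set (e := exist (fun U : X -> Prop => open U) (fun z => U z \/ G z) (@open_union2 X _ _ HU HG)).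
          exists (proj1_sig e); split; [exists e; split; auto|simpl; auto].
          right. exists U; split; auto. intro; simpl; tauto.
        - exists G; split; auto. exists Ge; split; auto. left. intro; simpl; tauto. }
      destruct Ed as [Ed|[O [FO Ed]]].
      + destruct (H (S n)) as [z [Vz nG]]. apply nG, Ed, Hd, Vz.
      + destruct (proj2 (HF' O FO) (S n)) as [z [nz Vz]]. apply nz, Ed, Hd, Vz. }
  set (A := fun z => ~ (O z \/ G z)).
  assert (Ha : forall n, exists z, A z /\ proj1_sig (V n) z) by exact HOm.
  set (a := fun n => proj1_sig (constructive_indefinite_description _ (Ha n))).
  assert (HaA : forall n, A (a n) /\ proj1_sig (V n) (a n)).
  { intro n. exact (proj2_sig (constructive_indefinite_description _ (Ha n))). }
  assert (Htail : forall O', open O' -> (exists y, A y /\ O' y) ->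
                   exists N, forall m, N <= m -> O' (a m)).
  { intros O' HO' [y [Ay O'y]]. apply NNPP; intro hno.
    assert (hinf : forall N, exists m, N <= m /\ ~ O' (a m)).
    { intro N. apply NNPP; intro h. apply hno. exists N. intros m hm.
      apply NNPP; intro h'. apply h. exists m; auto. }
    apply (Hmax (fun z => O z \/ O' z)).
    - split.
      + intros z h. left; exact h.
      + intro hs. apply Ay; left; exact (hs y (or_intror O'y)).
    - split. apply open_union2; auto.
      intro n. destruct (hinf n) as [m [hm nO']]. exists (a m). split.
      + destruct (HaA m) as [hA _]. intros [[h|h]|h]; auto; apply hA; auto.
      + exact (Vdec _ _ hm _ (proj2 (HaA m))). }
  set (T := fun n z => exists m, n <= m /\ spec_le (a m) z).
  assert (HT : forall n, inKX (T n)).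
  { intro n. split; [|split].
    - exists (a n). exists n; split; auto. apply spec_refl.
    - intros F HF Hcov.
      destruct (Hcov (a n)) as [O1 [FO1 O1a]]. { exists n; split; auto. apply spec_refl. }
      destruct (Htail O1 (HF O1 FO1)) as [N HN]. { exists (a n); split; auto. exact (proj1 (HaA n)). }
      destruct (@list_cover X a F n (N - n)) as [l [Hl Hlc]].
      { intros m hm. apply Hcov. exists m; split; auto. apply spec_refl. }
      exists (O1 :: l). split.
      + intros U [<-|h]; auto.
      + intros z [m [hm hz]].
        destruct (Nat.le_gt_cases N m) as [hNm|hmN].
        * exists O1; split; [left; auto|]. exact (open_up _ _ _ _ (HF O1 FO1) (HN m hNm) hz).
        * destruct (Hlc m) as [U [InU Ua]]; [lia|].
          exists U; split; [right; auto|]. exact (open_up _ _ _ _ (HF U (Hl U InU)) Ua hz).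
    - intros x y [m [hm hx]] hxy. exists m; split; auto. eapply spec_trans; eauto. }
  destruct (@Hwf G (fun K => exists n, K = T n) HG) as [K [[n ->] HKG2]].
  { intros K [n ->]. apply HT. }
  { split. exists (T 0); exists 0; auto.
    intros K1 K2 [n1 ->] [n2 ->]. exists (T (max n1 n2)). split; [exists (max n1 n2); auto|].
    split; intros z [m [hm hz]]; exists m; split; auto; lia. }
  { intros z Hz. apply HKG. intro k. destruct (Hz (T k) (ex_intro _ k eq_refl)) as [m [hm hz]].
    apply (open_up _ _ _ _ (proj2_sig (V k)) (Vdec _ _ hm _ (proj2 (HaA m))) hz). }
  destruct (proj1 (HaA n)). right. apply HKG2. exists n; split; auto. apply spec_refl.
Qed.

Lemma chain_compact : compact (fun z => forall n, proj1_sig (V n) z).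
Proof.
  intros F HF Hcov.
  destruct (chain_key _ (open_union HF) Hcov) as [n Hn].
  set (D := fun e : OX X => exists l, (forall U, In U l -> F U) /\
             subset (proj1_sig e) (fun x => exists U, In U l /\ U x)).
  assert (HD : directed (@OX_le X) D).
  { split. exists (Oempty X). exists nil; split; [intros U []|intros x []].
    intros a b [l1 [H1 S1]] [l2 [H2 S2]].
    assert (Ho : forall U, In U (l1 ++ l2) -> open U).
    { intros U hU. apply in_app_iff in hU. destruct hU; apply HF; auto. }
    exists (exist _ _ (@open_list X _ Ho)). split; [|split].
    - exists (l1 ++ l2). split.
      + intros U hU. apply in_app_iff in hU. destruct hU; auto.
      + intros x h; exact h.
    - intros x h. destruct (S1 x h) as [U [hU Ux]]. exists U; split; auto. apply in_app_iff; auto.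
    - intros x h. destruct (S2 x h) as [U [hU Ux]]. exists U; split; auto. apply in_app_iff; auto. }
  destruct (@HV n D (OUnion X D) HD (OUnion_sup X D)) as [d [[l [Hl Sl]] Hd]].
  { intros x Vx. destruct (Hn x Vx) as [U [FU Ux]].
    set (e := exist (fun U : X -> Prop => open U) U (HF U FU)).
    exists U; split; auto. exists e; split; auto. exists (U :: nil). split.
    - intros U' [<-|[]]; auto.
    - intros y hy. exists U; split; [left|]; auto. }
  exists l; split; auto. intros x Kx. apply Sl, Hd, Kx.
Qed.

End Chain.

Lemma cc_lc (X : space) (Hwf : well_filtered X) : core_compact X -> locally_compact X.
Proof.
  intros Hcc x U HU Ux.
  set (Ue := exist (fun U : X -> Prop => open U) U HU).
  destruct (Ocont_point X Hcc Ue x Ux) as [W [HW Wx]].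
  assert (step : forall V, way_below (@OX_le X) W V ->
            {V' | way_below (@OX_le X) W V' /\ way_below (@OX_le X) V' V}).
  { intros V h. apply constructive_indefinite_description. apply Ointerp; auto. }
  set (chain := fix chain (n : nat) : {V | way_below (@OX_le X) W V} :=
         match n with
         | 0 => exist _ Ue HW
         | S n => let (V, h) := chain n in
                  exist _ (proj1_sig (step V h)) (proj1 (proj2_sig (step V h)))
         end).
  set (V := fun n => proj1_sig (chain n)).
  assert (HV : forall n, way_below (@OX_le X) (V (S n)) (V n)).
  { intro n. unfold V. simpl. destruct (chain n) as [Vn h]. simpl.
    exact (proj2 (proj2_sig (step Vn h))). }
  exists (fun z => forall n, proj1_sig (V n) z). split; [|split].
  - apply chain_compact; auto.
  - exists (proj1_sig W). split; [exact (proj2_sig W)|split; auto].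
    intros z Wz n. pose proof (wb_le _ _ (OX_refl X) _ _ (proj2_sig (chain n))) as W'. exact (W' z Wz).
  - intros z h. exact (h 0).
Qed.

Section LC.
Variable X : space.

Lemma KX_refl (a : KX X) : KX_le a a.
Proof. intros x h; exact h. Qed.
Lemma KX_trans (a b c : KX X) : KX_le a b -> KX_le b c -> KX_le a c.
Proof. intros h1 h2 x h; exact (h1 x (h2 x h)). Qed.

Lemma Q_back (Hwf : well_filtered X) (a b : KX X) :
  subset (proj1_sig b) (interior (proj1_sig a)) -> way_below (@KX_le X) a b.
Proof.
  intros H D s HD Hs Hbs.
  set (KK := fun K => exists k, D k /\ proj1_sig k = K).
  destruct (Hwf (interior (proj1_sig a)) KK (interior_open X _)) as [K [[k [Dk <-]] Hk]].
  - intros K [k [_ <-]]. exact (proj2_sig k).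
  - destruct HD as [[d0 Dd0] Hdir]. split. exists (proj1_sig d0); exists d0; auto.
    intros K1 K2 [k1 [D1 <-]] [k2 [D2 <-]].
    destruct (Hdir k1 k2 D1 D2) as [k3 [D3 [H1 H2]]].
    exists (proj1_sig k3); split; [exists k3; auto|split; auto].
  - intros x Hx. apply H, Hbs. apply (KX_sup_inter X Hwf _ _ HD Hs).
    intros d Dd. apply Hx. exists d; auto.
  - exists k; split; auto. intros x h. exact (interior_sub X _ x (Hk x h)).
Qed.

Hypothesis HLC : locally_compact X.

Lemma Kb_exists (b : KX X) (V : X -> Prop) : open V -> subset (proj1_sig b) V ->
  exists L : KX X, subset (proj1_sig b) (interior (proj1_sig L)) /\ subset (proj1_sig L) V.
Proof.
  intros HV HbV. destruct (proj2_sig b) as [[x0 bx0] [Hbc _]].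
  destruct (LC_interp X HLC _ _ Hbc HV HbV) as [L [HLc [HLs [HbL HLV]]]].
  assert (HL : inKX L).
  { split; [|split; auto]. exists x0. exact (interior_sub X _ x0 (HbL x0 bx0)). }
  exists (exist _ L HL). simpl. auto.
Qed.

Lemma Kb_sep (b : KX X) z : ~ proj1_sig b z ->
  exists L : KX X, subset (proj1_sig b) (interior (proj1_sig L)) /\ ~ proj1_sig L z.
Proof.
  intros nbz. destruct (Kb_exists b _ (open_not_below X z)) as [L [H1 H2]].
  - intros y by_ hyz. apply nbz. destruct (proj2_sig b) as [_ [_ Hs]]. exact (Hs y z by_ hyz).
  - exists L; split; auto. intro h. exact (H2 z h (spec_refl X z)).
Qed.

Lemma sup_of_int (D : KX X -> Prop) (b : KX X) :
  (forall L, subset (proj1_sig b) (interior (proj1_sig L)) -> D L) ->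
  (forall d, D d -> subset (proj1_sig b) (proj1_sig d)) -> is_sup (@KX_le X) D b.
Proof.
  intros H1 H2. split.
  - intros d Dd. exact (H2 d Dd).
  - intros u Hu z uz. apply NNPP; intro nbz.
    destruct (Kb_sep b z nbz) as [L [HL nLz]]. exact (nLz (Hu L (H1 L HL) z uz)).
Qed.

Hypothesis Hwf : well_filtered X.

Lemma Q_fwd (a b : KX X) : way_below (@KX_le X) a b -> subset (proj1_sig b) (interior (proj1_sig a)).
Proof.
  intros H.
  set (D := fun L : KX X => subset (proj1_sig b) (interior (proj1_sig L))).
  assert (HD : directed (@KX_le X) D).
  { split.
    - destruct (Kb_exists b _ (@open_full X)) as [L [HL _]]. intros x _; exact I.
      exists L; exact HL.
    - intros L1 L2 h1 h2.
      destruct (Kb_exists b _ (open_inter (interior_open X (proj1_sig L1)) (interior_open X (proj1_sig L2))))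
        as [L3 [h3 h3']].
      { intros x bx. split; [apply h1|apply h2]; exact bx. }
      exists L3; split; [exact h3|split].
      + intros x h. exact (interior_sub X _ x (proj1 (h3' x h))).
      + intros x h. exact (interior_sub X _ x (proj2 (h3' x h))). }
  assert (Hs : is_sup (@KX_le X) D b).
  { apply sup_of_int; auto. intros d Dd x bx. exact (interior_sub X _ x (Dd x bx)). }
  destruct (H D b HD Hs (KX_refl b)) as [d [Dd Had]].
  intros x bx. exact (interior_mono X _ _ Had x (Dd x bx)).
Qed.

Lemma lc_KX : continuous_poset (@KX_le X) /\ property_Q X /\ xi_sigma_continuous X.
Proof.
  assert (HWB : forall b, directed (@KX_le X) (fun a => way_below (@KX_le X) a b) /\
                          is_sup (@KX_le X) (fun a => way_below (@KX_le X) a b) b).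
  { intro b. split.
    - split.
      + destruct (Kb_exists b _ (@open_full X)) as [L [HL _]]. intros x _; exact I.
        exists L. apply Q_back; auto.
      + intros a1 a2 h1 h2. apply Q_fwd in h1. apply Q_fwd in h2.
        destruct (Kb_exists b _ (open_inter (interior_open X (proj1_sig a1)) (interior_open X (proj1_sig a2))))
          as [L3 [h3 h3']].
        { intros x bx. split; [apply h1|apply h2]; exact bx. }
        exists L3; split; [apply Q_back; auto|split].
        * intros x h. exact (interior_sub X _ x (proj1 (h3' x h))).
        * intros x h. exact (interior_sub X _ x (proj2 (h3' x h))).
    - apply sup_of_int.
      + intros L HL. apply Q_back; auto.
      + intros d Dd. exact (wb_le _ _ KX_refl _ _ Dd). }
  split; [|split].
  - split; auto. intros D HD. destruct (KX_dsup X Hwf D HD) as [s [Hs _]]. exists s; auto.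
  - intros a b. split; [apply Q_fwd|apply Q_back; auto].
  - intros U [Hup Hsc].
    eapply open_ext; [|apply (open_union (F := fun O => open O /\ forall y, O y -> U (upK y)))].
    + intro x; split.
      * intros [O [[HO HOU] Ox]]. exact (HOU x Ox).
      * intros HUx. destruct (HWB (upK x)) as [Hd Hs].
        destruct (Hsc _ _ Hd Hs HUx) as [d [Hwd Ud]].
        apply Q_fwd in Hwd.
        destruct (Hwd x (spec_refl X x)) as [O [HO [Ox HOd]]].
        exists O; split; auto. split; auto. intros y Oy.
        apply (Hup d); auto. intros z hz. simpl in hz.
        destruct (proj2_sig d) as [_ [_ Hsat]]. exact (Hsat y z (HOd y Oy) hz).
    + intros O [HO _]; exact HO.
Qed.

End LC.

Section LCcc.
Variable X : space.

Lemma finite_ub (D : OX X -> Prop) (l : list (X -> Prop)) :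
  directed (@OX_le X) D ->
  (forall U, In U l -> exists d, D d /\ proj1_sig d = U) ->
  exists d, D d /\ forall U, In U l -> subset U (proj1_sig d).
Proof.
  intros [[d0 Dd0] Hdir]. induction l as [|U l IH]; intros H.
  - exists d0; split; auto. intros U [].
  - destruct (IH (fun U' h => H U' (or_intror h))) as [d1 [D1 H1]].
    destruct (H U (or_introl eq_refl)) as [d2 [D2 <-]].
    destruct (Hdir d1 d2 D1 D2) as [d3 [D3 [h1 h2]]].
    exists d3; split; auto. intros U' [<-|h].
    + exact h2.
    + intros x hx. exact (h1 x (H1 U' h x hx)).
Qed.

Lemma cwb (O V : OX X) (C : X -> Prop) : compact C -> subset (proj1_sig O) C ->
  subset C (proj1_sig V) -> way_below (@OX_le X) O V.
Proof.
  intros HC HOC HCV D s HD Hs HVs.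
  destruct (HC (fun U => exists d, D d /\ proj1_sig d = U)) as [l [Hl Hcov]].
  - intros U [d [_ <-]]. exact (proj2_sig d).
  - intros x Cx. destruct (sup_in_union X _ _ x Hs (HVs x (HCV x Cx))) as [d [Dd dx]].
    exists (proj1_sig d); split; auto. exists d; auto.
  - destruct (finite_ub D l HD Hl) as [d [Dd Hd]].
    exists d; split; auto. intros x Ox. destruct (Hcov x (HOC x Ox)) as [U [hU Ux]].
    exact (Hd U hU x Ux).
Qed.

Lemma lc_cc (HLC : locally_compact X) : core_compact X.
Proof.
  split.
  - intros D _. exists (OUnion X D). apply OUnion_sup.
  - intro V. split.
    + split. exists (Oempty X). apply Oempty_wb.
      intros a b ha hb. exists (Ounion2 X a b). split; [apply Owb_union2; auto|split].
      * intros x h; left; exact h.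
      * intros x h; right; exact h.
    + split.
      * intros d Dd. exact (wb_le _ _ (OX_refl X) _ _ Dd).
      * intros u Hu x Vx.
        destruct (HLC x (proj1_sig V) (proj2_sig V) Vx) as [C [HC [[O [HO [Ox HOC]]] HCV]]].
        set (Oe := exist (fun U : X -> Prop => open U) O HO).
        exact (Hu Oe (cwb Oe V C HC HOC HCV) x Ox).
Qed.

End LCcc.

Lemma contK_lc (X : space) (Hwf : well_filtered X) (Hfc : first_countable X) :
  continuous_poset (@KX_le X) -> locally_compact X.
Proof.
  intros [_ HC] x U HU Ux.
  set (b := upK x).
  destruct (HC b) as [HD Hs].
  set (KK := fun K => exists k, way_below (@KX_le X) k b /\ proj1_sig k = K).
  destruct (Hwf U KK HU) as [K [[k [Hk <-]] HkU]].
  - intros K [k [_ <-]]. exact (proj2_sig k).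
  - destruct HD as [[d0 Dd0] Hdir]. split. exists (proj1_sig d0); exists d0; auto.
    intros K1 K2 [k1 [D1 <-]] [k2 [D2 <-]].
    destruct (Hdir k1 k2 D1 D2) as [k3 [D3 [H1 H2]]].
    exists (proj1_sig k3); split; [exists k3; auto|split; auto].
  - intros z Hz. assert (hb : proj1_sig b z).
    { apply (KX_sup_inter X Hwf _ _ HD Hs). intros d Dd. apply Hz. exists d; auto. }
    exact (open_up X U _ _ HU Ux hb).
  - exists (proj1_sig k). split; [exact (proj1 (proj2 (proj2_sig k)))|split; auto].
    apply NNPP; intro nint.
    destruct (Hfc x) as [B [HBn HBb]].
    set (Q := fun n z => forall i, i <= n -> B i z).
    assert (HQ : forall n, nbhd (Q n) x).
    { induction n as [|n IH].
      - destruct (HBn 0) as [O [HO [Ox HOB]]]. exists O; repeat split; auto.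
        intros z Oz i hi. assert (i = 0) by lia. subst. exact (HOB z Oz).
      - destruct IH as [O1 [HO1 [O1x H1]]]. destruct (HBn (S n)) as [O2 [HO2 [O2x H2]]].
        exists (fun z => O1 z /\ O2 z). split; [apply open_inter; auto|split; [split; auto|]].
        intros z [h1 h2] i hi. destruct (Nat.eq_dec i (S n)) as [->|ne].
        + exact (H2 z h2).
        + apply (H1 z h1). lia. }
    assert (Hy : forall n, exists y, Q n y /\ ~ proj1_sig k y).
    { intro n. apply NNPP; intro h. apply nint.
      destruct (HQ n) as [O [HO [Ox HOQ]]]. exists O; repeat split; auto.
      intros z Oz. apply NNPP; intro nk. apply h. exists z; split; auto. }
    set (y := fun n => proj1_sig (constructive_indefinite_description _ (Hy n))).
    assert (Hyn : forall n, Q n (y n) /\ ~ proj1_sig k (y n)).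
    { intro n. exact (proj2_sig (constructive_indefinite_description _ (Hy n))). }
    assert (Hconv : forall O, open O -> O x -> exists N, forall m, N <= m -> O (y m)).
    { intros O HO Ox. assert (hnb : nbhd O x) by (exists O; split; [exact HO|split; [exact Ox|intros w hw; exact hw]]).
      destruct (HBb O hnb) as [N HN].
      exists N. intros m hm. apply HN. exact (proj1 (Hyn m) N hm). }
    set (L := fun n z => spec_le x z \/ exists m, n <= m /\ spec_le (y m) z).
    assert (HL : forall n, inKX (L n)).
    { intro n. split; [|split].
      - exists x. left. apply spec_refl.
      - intros F HF Hcov.
        destruct (Hcov x) as [O1 [FO1 O1x]]. { left; apply spec_refl. }
        destruct (Hconv O1 (HF O1 FO1) O1x) as [N HN].
        destruct (@list_cover X y F n (N - n)) as [l [Hl Hlc]].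
        { intros m hm. apply Hcov. right. exists m; split; auto. apply spec_refl. }
        exists (O1 :: l). split.
        + intros V [<-|h]; auto.
        + intros z [hz|[m [hm hz]]].
          * exists O1; split; [left; auto|]. exact (open_up _ _ _ _ (HF O1 FO1) O1x hz).
          * destruct (Nat.le_gt_cases N m) as [hNm|hmN].
            -- exists O1; split; [left; auto|]. exact (open_up _ _ _ _ (HF O1 FO1) (HN m hNm) hz).
            -- destruct (Hlc m) as [V [InV Vy]]; [lia|].
               exists V; split; [right; auto|]. exact (open_up _ _ _ _ (HF V (Hl V InV)) Vy hz).
      - intros a c [h|[m [hm h]]] hac.
        + left. eapply spec_trans; eauto.
        + right. exists m; split; auto. eapply spec_trans; eauto. }
    set (Lk := fun n => (exist (fun K => inKX K) (L n) (HL n) : KX X)).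
    set (D := fun d => exists n, d = Lk n).
    assert (HDd : directed (@KX_le X) D).
    { split. exists (Lk 0); exists 0; auto.
      intros a c [n1 ->] [n2 ->]. exists (Lk (max n1 n2)). split; [exists (max n1 n2); auto|].
      split; intros z [h|[m [hm h]]]; [left; auto|right; exists m; split; auto; lia
                                      |left; auto|right; exists m; split; auto; lia]. }
    assert (Hsup : is_sup (@KX_le X) D b).
    { split.
      - intros d [n ->] z hz. left. exact hz.
      - intros u Hu z uz. simpl. apply spec_le_open. intros O HO Ox.
        assert (hnb : nbhd O x) by (exists O; split; [exact HO|split; [exact Ox|intros w hw; exact hw]]).
      destruct (HBb O hnb) as [N HN].
        destruct (Hu (Lk N) (ex_intro _ N eq_refl) z uz) as [h|[m [hm h]]].
        + exact (open_up _ _ _ _ HO Ox h).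
        + apply (open_up _ _ _ _ HO (HN (y m) (proj1 (Hyn m) N hm)) h). }
    destruct (Hk D b HDd Hsup (KX_refl X b)) as [d [[n ->] Hd]].
    apply (proj2 (Hyn n)). apply Hd. right. exists n; split; auto. apply spec_refl.
Qed.

Theorem mainTheorem12 (X : space)
  (HT0 : T0 X) (Hfc : first_countable X) (Hwf : well_filtered X)
  (Hmin : forall K : X -> Prop, inKX K -> countable (minimal K)) :
  (locally_compact X <->
     (continuous_poset (@KX_le X) /\ xi_sigma_continuous X)) /\
  (locally_compact X <->
     (continuous_poset (@KX_le X) /\ property_Q X)) /\
  (locally_compact X <-> continuous_poset (@KX_le X)) /\
  (locally_compact X <-> core_compact X).
Proof.
  pose proof (fun h => lc_KX X h Hwf) as A1.
  pose proof (contK_lc X Hwf Hfc) as A2.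
  pose proof (lc_cc X) as A3.
  pose proof (cc_lc X Hwf) as A4.
  split; [|split; [|split]]; split; intro h.
  - destruct (A1 h) as [? [? ?]]; auto.
  - apply A2; apply h.
  - destruct (A1 h) as [? [? ?]]; auto.
  - apply A2; apply h.
  - apply (A1 h).
  - apply A2; exact h.
  - apply A3; exact h.
  - apply A4; exact h.
Qed.
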